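(* Let $G$ be a finite group and $q$ a prime divisor of $|G|$. Let $Q\in{\rm Syl}_q(G)$ with $|Q|=q^m$, $m\geq 1$. If $Q$ is cyclic and $G$ has exactly $t$ Sylow $q$-subgroups, then $|F_{q^m}(G)|\geq q^m+(t-1)(q^m-q^{m-1})$.
   Context: For a finite group $G$ and a positive integer $n$, $F_n(G)=\{g\in G\mid g^n=1\}$. *)

(* Defs.v *)
From mathcomp Require Import all_boot all_fingroup all_solvable.
Set Implicit Arguments. Unset Strict Implicit. Unset Printing Implicit Defensive.
Local Open Scope group_scope.

Definition Fn (gT : finGroupType) (n : nat) (G : {set gT}) : {set gT} :=
  [set g in G | g ^+ n == 1].

(* Main.v *)
Require Import Defs.
From mathcomp Require Import all_boot all_fingroup all_solvable.
From mathcomp Require Import zify.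
Local Open Scope group_scope.

Lemma gen_card (gT : finGroupType) (P : {group gT}) :
  cyclic P -> #|[set x | generator P x]| = totient #|P|.
Proof. by case/cyclicP=> a ->; rewrite totient_gen. Qed.

Theorem lemma2p1 (gT : finGroupType) (G Q : {group gT}) (q m t : nat) :
  prime q -> (q %| #|G|)%N ->
  Q \in 'Syl_q(G) -> #|Q| = (q ^ m)%N -> (1 <= m)%N ->
  cyclic Q -> #|'Syl_q(G)| = t ->
  (q ^ m + (t - 1) * (q ^ m - q ^ m.-1) <= #|Fn (q ^ m) G|)%N.
Proof.
move=> qpr _ QS cardQ m1 cycQ cardS.
have sylQ : q.-Sylow(G) Q by move: QS; rewrite inE.
set n := (q ^ m)%N.
set E := [set x in G | #[x] == n].
have cardP : forall P : {group gT}, P \in 'Syl_q(G) -> #|P| = n.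
  move=> P; rewrite inE => sylP.
  by rewrite (card_Hall sylP) -(card_Hall sylQ).
have cycP : forall P : {group gT}, P \in 'Syl_q(G) -> cyclic P.
  move=> P; rewrite inE => sylP.
  by have [g _ ->] := Sylow_trans sylQ sylP; rewrite cyclicJ.
have ES : forall x, x \in E -> <[x]>%G \in 'Syl_q(G).
  move=> x; rewrite inE => /andP[Gx /eqP ox].
  by rewrite inE pHallE cycle_subG Gx /= -(card_Hall sylQ) cardQ [#|_|]ox.
have cardE : #|E| = (t * totient n)%N.
  rewrite -sum1_card (partition_big (fun x => <[x]>%G) (mem 'Syl_q(G))) //=.
  rewrite -cardS -sum_nat_const; apply: eq_bigr => P SP.
  rewrite -(cardP P SP) -(@gen_card _ _ (cycP P SP)) -sum1_card.
  apply: eq_bigl => x; rewrite !inE.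
  apply/idP/idP.
    by case/andP=> _ /eqP <-; rewrite /generator.
  move=> /eqP defP; have xP : x \in P by rewrite defP cycle_id.
  move: SP; rewrite inE => sylP.
  rewrite (subsetP (pHall_sub sylP)) //= -[#[x]]/(#|<[x]>|) -defP.
  rewrite (card_Hall sylP) -(card_Hall sylQ) cardQ eqxx /=.
  by apply/eqP; apply: val_inj; rewrite /= defP.
have QE : #|Q :&: E| = totient n.
  rewrite /n -cardQ -(@gen_card _ _ cycQ); apply: eq_card => x; rewrite !inE.
  apply/idP/idP.
    case/andP=> xQ /andP[_ /eqP ox]; rewrite /generator eq_sym eqEcard cycle_subG xQ /=.
    by rewrite -[#|<[x]>|]/#[x] ox cardQ.
  move=> /eqP defQ; have xQ : x \in Q by rewrite defQ cycle_id.
  rewrite xQ (subsetP (pHall_sub sylQ)) //= -[#[x]]/(#|<[x]>|) -defQ cardQ.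
  by rewrite eqxx.
have sub : Q :|: E \subset Fn n G.
  apply/subsetP=> x; rewrite !inE => /orP[xQ | /andP[Gx /eqP ox]].
    by rewrite (subsetP (pHall_sub sylQ)) //= /n -cardQ expg_cardG.
  by rewrite Gx -ox expg_order eqxx.
apply: leq_trans (subset_leq_card sub).
rewrite cardsU QE cardE cardQ.
have t1 : (0 < t)%N by rewrite -cardS; apply/card_gt0P; exists Q.
have -> : (q ^ m - q ^ m.-1 = totient n)%N.
  by rewrite /n totient_pfactor // -{1}(prednK m1) expnS -{2}[(q ^ m.-1)%N]mul1n -mulnBl subn1.
rewrite mulnBl mul1n addnBA //; apply: leq_pmull t1.
Qed.
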